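(* Let $y$ solve $\dot y = f(y,t)$, $t\in(0,T]$, $y(0)=y_0$, with $f:\mathbb{R}^m\times\mathbb{R}\to\mathbb{R}^m$ Lipschitz and continuously differentiable in $t$, and let $Y(t)$ be an approximate solution with error $\epsilon(t)=y(t)-Y(t)$. Let $S(y(t))=v\cdot y(t)$ for some $v\in\mathbb{R}^m$ (so $\nabla_yS=v$), let $R$ be a threshold value, $t_t=\min_{t\in(0,T]}\arg(S(y(t))=R)$, $t_c=\min_{t\in(0,T]}\arg(S(Y(t))=R)$, and $e_Q=t_t-t_c$. Then $$e_Q=\frac{-v\cdot(y(t_c)-Y(t_c))-\mathcal{R}_1(t_c,t_t)}{v\cdot f(Y(t_c),t_c)+v^\top\nabla_yf(Y(t_c),t_c)\cdot(y(t_c)-Y(t_c))+\mathcal{R}_2(Y(t_c))}=\frac{-v\cdot\epsilon(t_c)-\mathcal{R}_1(t_c,t_t)}{v\cdot f(Y(t_c),t_c)+v^\top\nabla_yf(Y(t_c),t_c)\cdot\epsilon(t_c)+\mathcal{R}_2(Y(t_c))},$$ where $\mathcal{R}_1(t_t,t_c)=\tfrac12\frac{d^2S}{dt^2}(y(\xi))(t_t-t_c)^2$ for some $\xi$ between $t_t$ and $t_c$, and $\mathcal{R}_2(Y(t_c))=\|y(t_c)-Y(t_c)\|\,\mathcal{H}_2(Y(t_c))$ for some $\mathcal{H}_2$ with $\lim_{Y(t_c)\to y(t_c)}\mathcal{H}_2(Y(t_c))=0$.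
   Context: $\nabla_y f$ is the Jacobian of $f$ with respect to $y$; $\|\cdot\|$ is the Euclidean norm on $\mathbb{R}^m$. It is assumed the threshold is reached so that $t_t$ and $t_c$ exist. *)

(* Defs.v *)
From HB Require Import structures.
From mathcomp Require Import all_boot all_order all_algebra.
From mathcomp Require Import all_classical all_reals all_analysis.
Set Implicit Arguments. Unset Strict Implicit. Unset Printing Implicit Defensive.
Import Order.TTheory GRing.Theory Num.Theory.
Import numFieldNormedType.Exports.
Local Open Scope ring_scope.

Definition dotv (R : realType) (m : nat) (u w : 'rV[R]_m) : R :=
  \sum_(i < m) u ord0 i * w ord0 i.

(* Euclidean norm on R^m (the library's norm on 'rV is the max norm) *)
Definition enorm (R : realType) (m : nat) (u : 'rV[R]_m) : R :=
  Num.sqrt (dotv u u).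

(* Main.v *)
Require Import Defs.
From HB Require Import structures.
From mathcomp Require Import all_boot all_order all_algebra.
From mathcomp Require Import all_classical all_reals all_analysis.
From mathcomp Require Import ring lra.
Import Order.TTheory GRing.Theory Num.Theory.
Import numFieldNormedType.Exports.
Local Open Scope classical_set_scope.
Local Open Scope ring_scope.

Section Aux.
Variables (R : realType) (m : nat).

Lemma dotvD (v a b : 'rV[R]_m) : dotv v (a + b) = dotv v a + dotv v b.
Proof. by rewrite /dotv -big_split /=; apply: eq_bigr => i _; rewrite mxE mulrDr. Qed.
Lemma dotvZ (v a : 'rV[R]_m) k : dotv v (k *: a) = k * dotv v a.
Proof. by rewrite /dotv mulr_sumr; apply: eq_bigr => i _; rewrite mxE mulrCA. Qed.
Lemma dotvN (v a : 'rV[R]_m) : dotv v (- a) = - dotv v a.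
Proof. by rewrite -scaleN1r dotvZ mulN1r. Qed.
Lemma dotvB (v a b : 'rV[R]_m) : dotv v (a - b) = dotv v a - dotv v b.
Proof. by rewrite dotvD dotvN. Qed.

Lemma dotv_lin (v : 'rV[R]_m) : linear (dotv v).
Proof. by move=> k a b; rewrite dotvD dotvZ. Qed.

Definition dotvL (v : 'rV[R]_m) : {linear 'rV[R]_m -> R} :=
  HB.pack (dotv v) (GRing.isLinear.Build _ _ _ _ _ (dotv_lin v)).

Lemma dotv_differentiable (v x : 'rV[R]_m) : differentiable (dotv v) x.
Proof.
have -> : dotv v = \sum_(i < m) (v ord0 i *: (fun u : 'rV[R]_m => u ord0 i)).
  by rewrite fct_sumE; apply/funext => u.
apply: differentiable_sum => i.
apply: differentiableZ; exact: differentiable_coord.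
Qed.

Lemma dotv_continuous (v : 'rV[R]_m) : continuous (dotv v).
Proof. by move=> x; apply: differentiable_continuous; exact: dotv_differentiable. Qed.

Lemma diff_dotv (v x : 'rV[R]_m) : 'd (dotv v) x = dotv v :> ('rV[R]_m -> R).
Proof. exact: (@diff_lin _ _ _ (dotvL v) x (dotv_continuous v)). Qed.


Lemma coord_le_enorm (d : 'rV[R]_m) i : `|d ord0 i| <= enorm d.
Proof.
rewrite /enorm /dotv -sqrtr_sqr ler_sqrt; last by apply: sumr_ge0 => j _; by rewrite -expr2 sqr_ge0.
rewrite (bigD1 i) //= expr2 lerDl; apply: sumr_ge0 => j _; by rewrite -expr2 sqr_ge0.
Qed.

Lemma enorm_eq0 (d : 'rV[R]_m) : enorm d = 0 -> d = 0.
Proof.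
move=> e; apply/rowP => i; rewrite mxE; apply/normr0_eq0/eqP.
by rewrite eq_le normr_ge0 andbT -e coord_le_enorm.
Qed.

Lemma enorm_ge0 (d : 'rV[R]_m) : 0 <= enorm d.
Proof. exact: sqrtr_ge0. Qed.

Lemma inj_lin : linear (fun h : 'rV[R]_m => (h, 0 : R)).
Proof. by move=> k a b; apply/eqP; rewrite xpair_eqE /= ?scaler0 ?addr0 !eqxx. Qed.

Definition injL : {linear 'rV[R]_m -> ('rV[R]_m * R)%type} :=
  HB.pack (fun h : 'rV[R]_m => (h, 0 : R)) (GRing.isLinear.Build _ _ _ _ _ inj_lin).

Lemma pair_decomp (d : 'rV[R]_m) :
  (d, 0 : R) = \sum_(i < m) d ord0 i *: (delta_mx ord0 i, 0 : R).
Proof.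
have -> : (d, 0 : R) = injL d by [].
by rewrite {1}(row_sum_delta d) linear_sum; apply: eq_bigr => i _; rewrite linearZ.
Qed.

Lemma jac_eq (f : 'rV[R]_m -> R -> 'rV[R]_m) tc z d :
  (forall p, differentiable (fun q : ('rV[R]_m * R)%type => f q.1 q.2) p) ->
  d *m 'J (fun w => f w tc) z = 'd (fun q : ('rV[R]_m * R)%type => f q.1 q.2) (z, tc) (d, 0).
Proof.
move=> hF.
set Fj := (fun q : ('rV[R]_m * R)%type => f q.1 q.2).
have -> : (fun w => f w tc) = Fj \o (fun w => (id w, cst tc w)) by [].
have di : differentiable (fun w : 'rV[R]_m => (id w, cst tc w)) z.
  by apply: differentiable_pair.
rewrite /jacobian mul_rV_lin1 diff_comp //= diff_pair //=.
have -> : 'd id z d = d by rewrite diff_val.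
have -> : 'd (fun=> tc) z d = 0 :> R by rewrite diff_cst.
by [].
Qed.

Lemma dotv0 (v : 'rV[R]_m) : dotv v 0 = 0.
Proof. by rewrite -(scale0r 0) dotvZ mul0r. Qed.

Lemma dotv_sum (v : 'rV[R]_m) (F : 'I_m -> 'rV[R]_m) :
  dotv v (\sum_(i < m) F i) = \sum_(i < m) dotv v (F i).
Proof. by elim/big_rec2: _ => [|i a b _ <-]; rewrite ?dotv0 ?dotvD. Qed.

Lemma dF_decomp (L : {linear ('rV[R]_m * R)%type -> 'rV[R]_m}) v d :
  dotv v (L (d, 0)) = \sum_(i < m) d ord0 i * dotv v (L (delta_mx ord0 i, 0)).
Proof.
rewrite pair_decomp linear_sum dotv_sum; apply: eq_bigr => i _.
by rewrite linearZ dotvZ.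
Qed.

Lemma is_derive_chain (U W : normedModType R) (F : U -> W) (g : R -> U) (s : R) (g' : U) :
  is_derive s (1:R) g g' -> differentiable F (g s) ->
  is_derive s 1 (F \o g) ('d F (g s) g').
Proof.
move=> [dg <-] dF.
have dgd : differentiable g s by apply/derivable1_diffP.
have dc : differentiable (F \o g) s by exact: differentiable_comp.
apply: DeriveDef; first exact: diff_derivable.
rewrite deriveE // diff_comp //=; congr ('d F (g s) _); by rewrite deriveE.
Qed.

Lemma dF_decomp' (F : ('rV[R]_m * R)%type -> 'rV[R]_m) (p : ('rV[R]_m * R)%type) v d :
  dotv v ('d F p (d, 0)) = \sum_(i < m) d ord0 i * dotv v ('d F p (delta_mx ord0 i, 0)).
Proof. exact: dF_decomp. Qed.

Lemma tri (a b p e : R) : `|p - a| < e -> `|p - b| < e -> `|a - b| < 2 * e.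
Proof.
move=> h1 h2.
have -> : a - b = (p - b) - (p - a) by ring.
apply: (le_lt_trans (ler_normB _ _)).
by rewrite mulr2n mulrDl mul1r addrC; apply: ltrD.
Qed.

Lemma final_bound (d : 'rV[R]_m) (h : 'I_m -> R) (e eps : R) :
  0 < enorm d -> 0 < eps -> e = eps / (2 * (m%:R + 1)) ->
  (forall i, `|h i| < 2 * e) ->
  `|(\sum_(i < m) d ord0 i * h i) / enorm d| < eps.
Proof.
move=> en0 eps0 -> hh.
set M : R := m%:R.
have M0 : 0 <= M by rewrite /M ler0n.
rewrite normrM normfV (ger0_norm (ltW en0)) ltr_pdivrMr //.
apply: (le_lt_trans (ler_norm_sum _ _ _)).
apply: (@le_lt_trans _ _ (\sum_(i < m) enorm d * (2 * (eps / (2 * (M + 1)))))).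
  apply: ler_sum => i _; rewrite normrM; apply: ler_pM => //.
  - exact: coord_le_enorm.
  - exact: ltW (hh i).
rewrite sumr_const card_ord -[X in X < _]mulr_natr -/M.
have M1 : M + 1 != 0 by rewrite lt0r_neq0 // ltr_wpDl.
have -> : enorm d * (2 * (eps / (2 * (M + 1)))) * M = (eps * enorm d) * (M / (M + 1)).
  by field.
rewrite gtr_pMr ?mulr_gt0 // ltr_pdivrMr ?ltr_wpDl // mul1r.
by rewrite ltrDl.
Qed.

Arguments is_derive_chain {U W F g s g'}.

Lemma is_derive_affine (U : normedModType R) (p w : U) (s : R) :
  is_derive s 1 (fun s : R => p + s *: w) w.
Proof.
have -> : (fun s : R => p + s *: w) = cst p + ( *:%R^~ w) by apply/funext.
have hd : differentiable (cst p + ( *:%R^~ w)) s by [].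
apply: DeriveDef; first exact: diff_derivable.
by rewrite deriveE // diff_val /= add0r scale1r.
Qed.

Arguments is_derive_affine {U}.

Lemma derivable_pair_diff (U : normedModType R) (y : R -> U) t :
  derivable y t 1 -> differentiable (fun s : R => (y s, s)) t.
Proof.
move=> /derivable1_diffP dy; apply: differentiable_pair => //.
Qed.


Lemma H2_exists (f : 'rV[R]_m -> R -> 'rV[R]_m) (v yc : 'rV[R]_m) (tc : R) :
  (forall p, differentiable (fun q : ('rV[R]_m * R)%type => f q.1 q.2) p) ->
  (forall u, continuous (fun p : ('rV[R]_m * R)%type =>
        'd (fun q : ('rV[R]_m * R)%type => f q.1 q.2) p u)) ->
  exists H2 : 'rV[R]_m -> R,
   (forall z, dotv v (f yc tc) = dotv v (f z tc)
       + dotv v ((yc - z) *m 'J (fun w => f w tc) z) + enorm (yc - z) * H2 z)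
   /\ H2 z @[z --> yc] --> 0.
Proof.
move=> hF hFc.
set Fj := (fun q : ('rV[R]_m * R)%type => f q.1 q.2).
pose r z := dotv v (f yc tc) - dotv v (f z tc)
   - dotv v ((yc - z) *m 'J (fun w => f w tc) z).
exists (fun z => r z / enorm (yc - z)); split.
  move=> z; have [e0|ne0] := eqVneq (enorm (yc - z)) 0.
    rewrite e0 mul0r addr0.
    have ez : z = yc by apply/esym/subr0_eq/enorm_eq0.
    by rewrite ez subrr mul0mx dotv0 addr0.
  by rewrite mulrC divfK // /r; ring.
apply/(@cvgr0Pnorm_lt _ _ _ _ (nbhs_filter yc)) => eps eps0.
pose M : R := m%:R.
pose e' := eps / (2 * (M + 1)).
have M0 : 0 <= M by rewrite /M ler0n.
have e'0 : 0 < e' by rewrite /e' divr_gt0 // mulr_gt0 // ltr_pwDr.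
pose g i p := dotv v ('d Fj p (delta_mx ord0 i, 0)).
have gc : forall i, \forall p \near (yc, tc), `|g i (yc, tc) - g i p| < e'.
  move=> i.
  have hc : {for (yc, tc), continuous (g i)}.
    exact: (continuous_comp (hFc (delta_mx ord0 i, 0) (yc, tc)) (dotv_continuous v _)).
  exact: ((cvgrPdist_lt _ _).1 hc e' e'0).
have := @filter_forall _ _ _ _ (nbhs_filter (yc, tc)) gc => /nbhs_ballP [del del0 hdel].
apply/nbhs_ballP; exists del => // z hz /=.
set d := yc - z.
have [e0|ne0] := eqVneq (enorm d) 0.
  by rewrite e0 invr0 mulr0 normr0.
have en0 : 0 < enorm d by rewrite lt_def ne0 enorm_ge0.
pose gam s := ((z, tc) + s *: (d, 0)) : ('rV[R]_m * R)%type.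
pose phi s := dotv v (Fj (gam s)).
have hd : forall s, is_derive s (1:R) phi (dotv v ('d Fj (gam s) (d, 0))).
  move=> s.
  have h1 := is_derive_chain (is_derive_affine (z, tc) (d, 0) s) (hF (gam s)).
  have h2 := is_derive_chain h1 (dotv_differentiable v (Fj (gam s))).
  rewrite (diff_dotv v (Fj (gam s))) in h2.
  exact: h2.
have hcont : {within `[0, 1], continuous phi}.
  apply: continuous_in_subspaceT => x _.
  have [dd _] := hd x.
  by apply: differentiable_continuous; apply/derivable1_diffP.
have [c hc e] := MVT ltr01 (fun x _ => hd x) hcont.
have g1 : gam 1 = (yc, tc).
  by rewrite /gam scale1r; apply/eqP; rewrite xpair_eqE /= addr0 /d addrC subrK !eqxx.
have g0 : gam 0 = (z, tc) by rewrite /gam scale0r addr0.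
have rE : r z = \sum_(i < m) d ord0 i * (g i (gam c) - g i (z, tc)).
  rewrite /r -/d (jac_eq f tc z d hF).
  have -> : dotv v (f yc tc) - dotv v (f z tc) = phi 1 - phi 0 by rewrite /phi g1 g0.
  rewrite e subr0 mulr1.
  have E1 := dF_decomp' Fj (gam c) v d.
  have E2 := dF_decomp' Fj (z, tc) v d.
  have -> : \sum_(i < m) d ord0 i * (g i (gam c) - g i (z, tc)) =
     \sum_(i < m) d ord0 i * g i (gam c) - \sum_(i < m) d ord0 i * g i (z, tc).
    by rewrite -sumrB; apply: eq_bigr => i _; rewrite mulrBr.
  congr (_ - _).
  exact: E1.
  exact: E2.
have bz : ball (yc, tc) del (z, tc).
  split => /=; [exact: hz|exact: ballxx].
have bg : ball (yc, tc) del (gam c).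
  split => /=.
    move: hz; rewrite -!ball_normE /ball_ /=.
    have -> : yc - (z + c *: d) = (1 - c) *: d.
      by rewrite scalerBl scale1r opprD addrA.
    move: hc; rewrite in_itv /= => /andP[c0 c1] h.
    rewrite normrZ; apply: le_lt_trans h; rewrite -[X in _ <= X]mul1r.
    apply: ler_wpM2r => //; rewrite ger0_norm; lra.
  by rewrite scaler0 addr0; exact: ballxx.
have h1 := hdel (gam c) bg.
have h2 := hdel (z, tc) bz.
have key : forall i, `|g i (gam c) - g i (z, tc)| < 2 * e'.
  by move=> i; apply: (tri _ _ _ _ (h1 i) (h2 i)).
rewrite rE.
exact: (final_bound d (fun i => g i (gam c) - g i (z, tc)) e' eps en0 eps0 erefl key).
Qed.

End Aux.
Arguments is_derive_chain {R U W F g s g'}.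
Arguments is_derive_affine {R U}.

Section Aux2.
Variables (R : realType).

Lemma test (S G : R -> R) (b K t : R) :
  is_derive t (1:R) S (G t) -> derivable G t 1 ->
  is_derive t (1:R) (cst (S b) - S - (G : R -> R) * (cst b - id : R -> R) - (cst (K/2) : R -> R) * (cst b - id : R -> R) ^+ 2 : R -> R)
    ((b - t) * (K - derive1 G t)).
Proof.
move=> hS /derivableP hG.
apply: is_derive_eq.
rewrite derive1E /cst /=. have e : forall x y : R, x *: y = x * y by []. rewrite !e /=. have e2 : ((fun=> b) - id) t = b - t :> R by []. rewrite e2 mulr0 addr0. by field.
Qed.

Lemma mvt_zero (phi dphi : R -> R) (lo hi T : R) :
  0 < lo -> lo < hi -> hi <= T ->
  (forall t, 0 < t <= T -> is_derive t (1:R) phi (dphi t)) ->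
  phi lo = 0 -> phi hi = 0 ->
  exists2 c, lo < c < hi & dphi c = 0.
Proof.
move=> h0 hlt hT hd plo phi0.
have inT : forall x, x \in `[lo, hi] -> 0 < x <= T.
  move=> x; rewrite in_itv /= => /andP[h1 h2].
  by apply/andP; split; [exact: lt_le_trans h1|exact: le_trans hT].
have H1 : forall x, x \in `]lo, hi[ -> is_derive x 1 phi (dphi x).
  move=> x hx; apply: hd; apply: inT; move: hx; rewrite !in_itv /= => /andP[? ?].
  by rewrite !ltW.
have H2 : {within `[lo, hi], continuous phi}.
  apply: continuous_in_subspaceT => x /[!inE] hx.
  have [dd _] := hd x (inT x hx).
  by apply: differentiable_continuous; apply/derivable1_diffP.
have [c hc e] := MVT hlt H1 H2.
exists c; first by move: hc; rewrite in_itv.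
move: e; rewrite plo phi0 subrr => /esym/eqP; rewrite mulf_eq0 subr_eq0.
by rewrite (gt_eqF hlt) orbF => /eqP.
Qed.

Lemma taylor2 (S G : R -> R) (a b T : R) :
  0 < a <= T -> 0 < b <= T -> a != b ->
  (forall t, 0 < t <= T -> is_derive t (1:R) S (G t)) ->
  (forall t, 0 < t <= T -> derivable G t 1) ->
  exists2 xi, Order.min a b < xi < Order.max a b &
     S b = S a + G a * (b - a) + 2^-1 * derive1n 2 S xi * (b - a) ^+ 2.
Proof.
move=> /andP[a0 aT] /andP[b0 bT] ab hS hG.
have ba0 : b - a != 0 by rewrite subr_eq0 eq_sym.
set K := 2 * (S b - S a - G a * (b - a)) / (b - a) ^+ 2.
pose phi := (cst (S b) - S - (G : R -> R) * (cst b - id : R -> R) - (cst (K/2) : R -> R) * (cst b - id : R -> R) ^+ 2 : R -> R).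
have hd : forall t, 0 < t <= T -> is_derive t (1:R) phi ((b - t) * (K - derive1 G t)).
  by move=> t ht; apply: test; [exact: hS|exact: (hG t ht)].
have phiE : forall t, phi t = S b - S t - G t * (b - t) - K / 2 * (b - t) ^+ 2.
  by move=> t; rewrite /phi /= exprfctE.
have pa : phi a = 0 by rewrite phiE /K; field.
have pb : phi b = 0 by rewrite phiE subrr; ring.
have [c hc e] : exists2 c, Order.min a b < c < Order.max a b & (b - c) * (K - derive1 G c) = 0.
  case: (ltgtP a b) => [hab|hba|eab].
  - exact: (mvt_zero _ _ _ _ _ a0 hab bT hd pa pb).
  - exact: (mvt_zero _ _ _ _ _ b0 hba aT hd pb pa).
  - by rewrite eab eqxx in ab.
exists c => //.
have cb : b - c != 0.
  rewrite subr_eq0; apply/eqP => eb; move: hc; rewrite -eb gt_min lt_max ltxx !orbF.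
  by move=> /andP[h1 h2]; move: (lt_trans h1 h2); rewrite ltxx.
have eK : K = derive1 G c.
  by move/eqP: e; rewrite mulf_eq0 (negbTE cb) /= subr_eq0 => /eqP.
have c0 : 0 < c.
  case/andP: hc => h1 _; apply: le_lt_trans h1.
  by rewrite le_min !ltW.
have cT : c < T.
  case/andP: hc => _ h1; apply: lt_le_trans h1 _.
  by rewrite ge_max aT bT.
have d2 : derive1n 2 S c = derive1 G c.
  rewrite derive1nS derive1n1 derive1E [RHS]derive1E; apply: near_eq_derive.
  have /near_in_itvoo hn : c \in `]0, T[ by rewrite in_itv /= c0 cT.
  near=> x.
  have hx : 0 < x <= T.
    suff : x \in `]0, T[ by rewrite in_itv /= => /andP[-> /ltW ->].
    by near: x.
  by rewrite derive1E; case: (hS x hx) => _ ->.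
rewrite d2 -eK /K; field.
Unshelve. all: by end_near.
Qed.

Lemma final_alg (eQ den num : R) :
  eQ * den = num -> eQ * den = num /\ (den != 0 -> eQ = num / den).
Proof. by move=> e; split => // hd; rewrite -e mulfK. Qed.

End Aux2.

Theorem corollary2 (R : realType) (m : nat)
  (f : 'rV[R]_m -> R -> 'rV[R]_m) (y Y : R -> 'rV[R]_m) (y0 : 'rV[R]_m)
  (T : R) (v : 'rV[R]_m) (Rth tt tc : R) :
  (* f is Lipschitz in y *)
  (exists L : R, forall (z w : 'rV[R]_m) (t : R),
      enorm (f z t - f w t) <= L * enorm (z - w)) ->
  (* f is continuously differentiable (jointly in (y,t)) *)
  (forall p : 'rV[R]_m * R, differentiable (fun q : 'rV[R]_m * R => f q.1 q.2) p) ->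
  (forall u : 'rV[R]_m * R,
      continuous (fun p : 'rV[R]_m * R => 'd (fun q : 'rV[R]_m * R => f q.1 q.2) p u)) ->
  (* y solves y' = f(y,t) on (0,T], y(0) = y0 *)
  y 0 = y0 ->
  (forall t, 0 < t <= T -> is_derive t 1 y (f (y t) t)) ->
  (* t_t = first time in (0,T] with S(y(t)) = R, S(x) = v . x *)
  0 < tt <= T -> dotv v (y tt) = Rth ->
  (forall t, 0 < t <= T -> dotv v (y t) = Rth -> tt <= t) ->
  (* t_c = first time in (0,T] with S(Y(t)) = R *)
  0 < tc <= T -> dotv v (Y tc) = Rth ->
  (forall t, 0 < t <= T -> dotv v (Y t) = Rth -> tc <= t) ->
  exists (xi : R) (H2 : 'rV[R]_m -> R),
    [/\ Num.min tt tc <= xi <= Num.max tt tc,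
        (* R_2(z) = ||y(t_c) - z|| H_2(z) is the first-order Taylor remainder
           of v . f(., t_c) expanded at z and evaluated at y(t_c) *)
        (forall z : 'rV[R]_m,
            dotv v (f (y tc) tc) =
              dotv v (f z tc) + dotv v ((y tc - z) *m 'J (fun w => f w tc) z)
              + enorm (y tc - z) * H2 z),
        H2 z @[z --> y tc] --> 0 &
        let eQ := tt - tc in
        let eps := y tc - Y tc in
        let R1 := 2^-1 * derive1n 2 (fun s : R => dotv v (y s)) xi * (tt - tc) ^+ 2 in
        let num := - dotv v eps - R1 in
        let den := dotv v (f (Y tc) tc)
                   + dotv v (eps *m 'J (fun w => f w tc) (Y tc))
                   + enorm eps * H2 (Y tc) in
        eQ * den = num /\ (den != 0 -> eQ = num / den)].
Proof.
move=> _ hF hFc _ hy /andP[tt0 ttT] Stt _ /andP[tc0 tcT] SYtc _.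
have [H2 [HT HL]] := H2_exists R m f v (y tc) tc hF hFc.
pose S := fun s => dotv v (y s).
pose G := fun s => dotv v (f (y s) s).
have hS : forall t, 0 < t <= T -> is_derive t (1:R) S (G t).
  move=> t ht.
  have h := is_derive_chain (hy t ht) (dotv_differentiable R m v (y t)).
  rewrite diff_dotv in h; exact: h.
have hG : forall t, 0 < t <= T -> derivable G t 1.
  move=> t ht; apply/derivable1_diffP.
  have hp := derivable_pair_diff _ _ _ _ (@ex_derive _ _ _ _ _ _ _ (hy t ht)).
  exact: (differentiable_comp (differentiable_comp hp (hF _)) (dotv_differentiable _ _ _ _)).
have E0 := HT (Y tc).
have [e|ne] := eqVneq tt tc.
  exists tt, H2; split => //.
    by rewrite ge_min le_max lexx.
  apply: final_alg.
  rewrite -E0 e subrr mul0r dotvB SYtc -Stt e subrr expr0n /= mulr0; ring.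
have [xi hxi hT] := taylor2 R S G tc tt T (ltac:(by rewrite tc0 tcT)) (ltac:(by rewrite tt0 ttT)) (ltac:(by rewrite eq_sym)) hS hG.
exists xi, H2; split => //.
  by case/andP: hxi; rewrite minC maxC => h1 h2; rewrite !ltW.
apply: final_alg.
rewrite -E0 dotvB SYtc -Stt.
rewrite /S /G in hT; rewrite hT; ring.
Qed.
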